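(* For all real $x$ and every real $\kappa \geq 1$, \[ Q(x) \geq \left(\frac{e^{(\pi(\kappa-1)+2)^{-1}}}{2\kappa}\sqrt{\frac{1}{\pi}(\kappa-1)(\pi(\kappa-1)+2)}\,\right) e^{-\frac{\kappa x^2}{2}}. \]
   Context: $Q$ denotes the Gaussian $Q$-function, $Q(x) = \frac{1}{\sqrt{2\pi}}\int_x^\infty e^{-t^2/2}\,dt$ for $x\in\mathbb{R}$. *)

(* Defs.v *)
From Stdlib Require Import Reals.
Open Scope R_scope.

Definition gauss_density (t : R) : R := exp (- t ^ 2 / 2) / sqrt (2 * PI).

Definition is_Q (x q : R) : Prop :=
  forall eps : R, 0 < eps ->
    exists M : R, forall b : R, M <= b ->
      forall pr : Riemann_integrable gauss_density x b,
        Rabs (RiemannInt pr - q) < eps.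

(* Main.v *)
Require Import Defs.
From Stdlib Require Import Reals.
Open Scope R_scope.
From Stdlib Require Import Lra.
From Coquelicot Require Import Coquelicot.
From mathcomp Require all_boot all_order all_algebra all_classical all_reals all_analysis.
From mathcomp Require Rstruct Rstruct_topology.

Definition g2 (t:R) : R := exp (- (t^2)).

Module MC.
Import all_boot all_order all_algebra all_classical all_reals all_analysis Rstruct Rstruct_topology.
Import Order.TTheory GRing.Theory Num.Theory.
Import numFieldNormedType.Exports.
Local Open Scope classical_set_scope.
Local Open Scope ring_scope.

Lemma cosE' (x : R) : cos x = Rtrigo_def.cos x.
Proof.
rewrite /Rtrigo_def.cos; case: exist_cos => l.
rewrite /cos_in /infinite_sum => H.
have h1 : series (cos_coeff' x) @ \oo --> l.
  rewrite -cvg_shiftS /=. Set Printing All. idtac. Unset Printing All. apply/(@cvgrPdist_lt _ R^o) => /= e /RltP /H[N NH].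
  near=> n.
  have nN : (n >= N)%coq_nat by apply/ssrnat.leP; near: n; exact: nbhs_infty_ge.
  move: NH => /(_ _ nN) /[!RdistE] /RltP /=.
  rewrite distrC sum_f_R0E; congr (`| _ - _ | < e).
  apply: eq_bigr=> k _; rewrite /cos_coeff' /cos_n RdivE !RpowE INRE factE /Rsqr.
  change ((2*k)%coq_nat) with (2*k)%N; rewrite -[in RHS]mul2n exprM expr2 mulrAC //.
have A := (cvg_lim (@Rhausdorff R) h1). have B := (cvg_lim (@Rhausdorff R) (@cvg_cos_coeff' R x)). rewrite -B -A //.
Unshelve. all: by end_near. Qed.

Lemma piE : pi = PI.
Proof.
have [h1 h2] := @pihalf_02_cos_pihalf R.
have h3 : pi / 2 = PI / 2.
  apply: cos_02_uniq => //.
  - have two : (2%:R : R) = IZR 2 by rewrite IZRposE INRE.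
    rewrite two -RdivE; apply/andP; split; apply/RleP; have := PI_RGT_0; have := PI_4; move=> ? ?; rewrite -?R0E; lra.
  - have two : (2%:R : R) = IZR 2 by rewrite IZRposE INRE.
    by rewrite cosE' two -RdivE; exact: cos_PI2.
by rewrite -[LHS](@divfK _ 2) // h3 divfK.
Qed.

Definition RT : realType := R.
Lemma deriv_bridge (f : RT -> RT) (x l : RT) :
  derivable f x 1 -> derive1 f x = l -> derivable_pt_lim f x l.
Proof.
move=> df; rewrite derive1E => <-.
have hc : (fun h => h^-1 *: ((f \o shift x) (h *: 1) - f x)) @ 0^' --> 'D_1 f x by [].
move=> e /RltP e0.
move/cvgrPdist_lt: hc => /(_ e e0).
move/nbhs_ballP => [d /= d0 H].
have d0' : Rlt 0 d by apply/RltP.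
exists (mkposreal d d0') => h hn0 /= hd.
have hb : ball (0:RT) d h.
  by rewrite /ball /= sub0r normrN -RabsE; apply/RltP.
have := H h hb; rewrite /= => /(_ (introN eqP hn0)).
rewrite distrC RabsE => /RltP.
have -> : (h^-1 *: (f (h%:A + x) - f x) : RT) = (f (x + h) - f x) / h.
  by rewrite /GRing.scale /= mulr1 (addrC h x) mulrC.
by [].
Qed.

Definition IG : RT -> RT := @gauss_integral_proof.integral0_gauss RT.

Lemma g2E (x : RT) : gauss_fun x = g2 x.
Proof. by rewrite /g2 /gauss_fun RexpE RpowE. Qed.

Lemma IG_der (x : RT) : 0 < x -> derivable_pt_lim IG x (g2 x).
Proof.
move=> x0; rewrite -g2E; apply: deriv_bridge.
- apply: (@continuous_FTC1 RT gauss_fun (BLeft 0) _ (x + 1) _ _ _ _).1.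
  + by rewrite ltrDl.
  + apply: continuous_compact_integrable => //; first exact: segment_compact.
    by apply: continuous_subspaceT; exact: continuous_gauss_fun.
  + by rewrite /=; rewrite lte_fin.
  + by move=> ?; exact: continuous_gauss_fun.
- apply: (@continuous_FTC1 RT gauss_fun (BLeft 0) _ (x + 1) _ _ _ _).2.
  + by rewrite ltrDl.
  + apply: continuous_compact_integrable => //; first exact: segment_compact.
    by apply: continuous_subspaceT; exact: continuous_gauss_fun.
  + by rewrite /=; rewrite lte_fin.
  + by move=> ?; exact: continuous_gauss_fun.
Qed.

Lemma IG0 : IG 0 = 0.
Proof. by rewrite /IG /gauss_integral_proof.integral0_gauss set_itv1 Rintegral_set1. Qed.

Lemma IG_right0 (e : R) : Rlt 0 e -> exists d : R, Rlt 0 d /\ forall t : R, Rlt 0 t -> Rlt t d -> Rlt (Rabs (IG t)) e.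
Proof.
move=> /RltP e0.
have hc : {within `[0, 1], continuous IG}.
  apply: parameterized_integral_continuous => //.
  apply: continuous_compact_integrable => //; first exact: segment_compact.
  by apply: continuous_subspaceT; exact: continuous_gauss_fun.
have [_ h _] := (continuous_within_itvP _ ltr01).1 hc.
move/cvgrPdist_lt: h => /(_ e e0).
move/nbhs_ballP => [d /= d0 H].
exists d; split; first by apply/RltP.
move=> t t0 td.
have hb : ball (0:RT) d t.
  by rewrite /ball /= sub0r normrN ger0_norm; [apply/RltP | apply/ltW/RltP].
have t0' : 0 < t by apply/RltP.
have := H t hb; rewrite /= IG0 sub0r normrN => /(_ t0').
by rewrite RabsE => /RltP.
Qed.

Lemma IG_sq_lim (e : R) : Rlt 0 e -> exists M : R, forall x : R, Rlt M x -> Rlt (Rabs (IG x ^ 2 - PI / 4)%coqR) e.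
Proof.
move=> /RltP e0.
have h := @gauss_integral_proof.cvg_integral0_gauss_sqr RT.
move/cvgrPdist_lt: h => /(_ e e0) [M [_ HM]].
exists M => x /RltP Mx.
have four : (4%:R : R) = IZR 4 by rewrite IZRposE INRE.
have := HM x Mx; rewrite piE distrC four => H; apply/RltP.
by rewrite RabsE RpowE RminusE RdivE.
Qed.

Lemma IG_der' (x : R) : Rlt 0 x -> derivable_pt_lim IG x (g2 x).
Proof. by move/RltP; exact: IG_der. Qed.
Lemma IG_ge0 (x : R) : Rle 0 (IG x).
Proof. apply/RleP; exact: gauss_integral_proof.integral0_gauss_ge0. Qed.
End MC.

From Stdlib Require Import ssreflect.
Open Scope R_scope.

Ltac nz := repeat split; match goal with |- ?a <> ?b => let H := fresh in intro H; lra end.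

Lemma exp_mono x y : x <= y -> exp x <= exp y.
Proof. move=> [H|->]; [left; apply exp_increasing; exact H| right; reflexivity]. Qed.

Lemma g2_cont x : continuous g2 x.
Proof. apply: ex_derive_continuous; unfold g2; auto_derive; auto. Qed.

Lemma g2_le1 x : Rabs (g2 x) <= 1.
Proof.
unfold g2; rewrite Rabs_pos_eq; [|left; apply exp_pos].
rewrite -exp_0; apply exp_mono. nra.
Qed.

Definition J x := RInt g2 0 x.

Lemma J_der x : is_derive J x (g2 x).
Proof.
apply: is_derive_RInt; [|apply g2_cont].
apply: filter_forall => b; apply: RInt_correct; apply: ex_RInt_continuous => z _; apply g2_cont.
Qed.

Lemma E_const a b : 0 < a -> a < b -> MC.IG b - J b = MC.IG a - J a.
Proof.
move=> a0 ab.
assert (Hd : forall c, a <= c <= b -> derivable_pt_lim (fun x => MC.IG x - J x) c ((fun _ => 0) c)).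
{ move=> c Hc. replace 0 with (g2 c - g2 c) by ring.
  apply: derivable_pt_lim_minus.
  + apply: MC.IG_der'; lra.
  + apply/is_derive_Reals; apply J_der. }
destruct (MVT_cor2 _ _ a b ab Hd) as [c [Hc _]]. simpl in Hc. lra.
Qed.

Lemma J_abs a : 0 <= a -> Rabs (J a) <= a.
Proof.
move=> a0. unfold J.
have := abs_RInt_le_const g2 0 a 1 a0.
rewrite Rminus_0_r Rmult_1_r. apply.
- apply: ex_RInt_continuous => z _; apply g2_cont.
- move=> t _; apply g2_le1.
Qed.

Lemma IG_J x : 0 <= x -> MC.IG x = J x.
Proof.
move=> x0. destruct (Req_dec x 0) as [->|xn0].
- rewrite MC.IG0 /J RInt_point. reflexivity.
- apply: Rminus_diag_uniq.
  apply: Rabs_eq_0. apply: Rle_antisym; [|apply Rabs_pos].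
  apply: Rnot_lt_le => H.
  set e := Rabs (MC.IG x - J x) / 3.
  have e0 : 0 < e by rewrite /e; lra.
  have [d [d0 Hd]] := MC.IG_right0 e e0.
  set a := Rmin (x/2) (Rmin (d/2) (e/2)).
  have a0 : 0 < a by rewrite /a; repeat apply Rmin_pos; lra.
  have ax : a < x by have := Rmin_l (x/2) (Rmin (d/2) (e/2)); rewrite -/a; lra.
  have ad : a < d by have := Rmin_r (x/2) (Rmin (d/2) (e/2)); have := Rmin_l (d/2) (e/2); rewrite -/a; lra.
  have ae : a < e by have := Rmin_r (x/2) (Rmin (d/2) (e/2)); have := Rmin_r (d/2) (e/2); rewrite -/a; lra.
  have h1 := Hd a a0 ad.
  have h2 := J_abs a (Rlt_le _ _ a0).
  have h3 := E_const a x a0 ax.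
  have h4 := Rabs_triang (MC.IG a) (- J a).
  rewrite Rabs_Ropp in h4.
  have : Rabs (MC.IG x - J x) < 3 * e.
    rewrite h3. unfold Rminus. lra.
  rewrite /e; lra.
Qed.

Lemma J_lim eps : 0 < eps -> exists M, forall b, M <= b -> Rabs (J b - sqrt PI / 2) < eps.
Proof.
move=> e0.
have sp : 0 < sqrt PI by apply sqrt_lt_R0; apply PI_RGT_0.
have spp : sqrt PI * sqrt PI = PI by apply sqrt_sqrt; left; apply PI_RGT_0.
have [M HM] := MC.IG_sq_lim (eps * (sqrt PI / 2)) ltac:(apply Rmult_lt_0_compat; lra).
exists (Rmax M 0 + 1) => b Hb.
have bM : M < b by have := Rmax_l M 0; lra.
have b0 : 0 <= b by have := Rmax_r M 0; lra.
have := HM b bM. rewrite IG_J //.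
have Jg : 0 <= J b by rewrite -IG_J //; apply MC.IG_ge0.
have eq : J b ^ 2 - PI / 4 = (J b - sqrt PI / 2) * (J b + sqrt PI / 2).
{ replace (PI / 4) with (sqrt PI * sqrt PI / 4) by (rewrite spp; field). field. }
rewrite eq Rabs_mult (Rabs_pos_eq (J b + _)); [|lra].
move=> H.
apply (Rmult_lt_reg_r (J b + sqrt PI / 2)); [lra|].
apply: (Rlt_le_trans _ _ _ H).
apply Rmult_le_compat_l; lra.
Qed.

Definition P x := RInt gauss_density 0 x.

Lemma gd_cont x : continuous gauss_density x.
Proof. apply: ex_derive_continuous; unfold gauss_density; auto_derive; auto. Qed.

Lemma P_J b : P b = sqrt 2 / sqrt (2 * PI) * J (/ sqrt 2 * b).
Proof.
have s2 : 0 < sqrt 2 by apply sqrt_lt_R0; lra.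
have h2 : sqrt 2 * sqrt 2 = 2 by apply sqrt_sqrt; lra.
have sP : 0 < sqrt (2 * PI) by apply sqrt_lt_R0; have := PI_RGT_0; lra.
rewrite /J.
have E1 := RInt_comp_lin g2 (/ sqrt 2) 0 0 b (ex_RInt_continuous _ _ _ (fun z _ => g2_cont z)).
rewrite Rmult_0_r !Rplus_0_r in E1. rewrite -E1.
have -> : forall X, sqrt 2 / sqrt (2*PI) * X = scal (sqrt 2 / sqrt (2*PI)) X by [].
rewrite -[in RHS]RInt_scal; last first.
{ apply: ex_RInt_continuous => z _.
  apply: ex_derive_continuous; rewrite /scal /= /mult /=; unfold g2; auto_derive; auto. }
rewrite /P. apply RInt_ext => t _.
rewrite /scal /= /mult /= /gauss_density /g2.
replace ((/ sqrt 2 * t + 0) ^ 2) with (t ^ 2 / (sqrt 2 * sqrt 2)) by (field; nz).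
rewrite h2. replace (- (t^2/2)) with (- t^2/2) by field. field; nz.
Qed.

Lemma P_lim eps : 0 < eps -> exists M, forall b, M <= b -> Rabs (P b - 1 / 2) < eps.
Proof.
move=> e0.
have s2 : 0 < sqrt 2 by apply sqrt_lt_R0; lra.
have sp : 0 < sqrt PI by apply sqrt_lt_R0; apply PI_RGT_0.
have sP : sqrt (2 * PI) = sqrt 2 * sqrt PI by apply sqrt_mult; have := PI_RGT_0; lra.
have [M HM] := J_lim (eps * sqrt PI) ltac:(apply Rmult_lt_0_compat; lra).
exists (sqrt 2 * Rmax M 0) => b Hb.
have Hb' : M <= / sqrt 2 * b.
{ have := Rmax_l M 0. move=> H. apply (Rmult_le_reg_l (sqrt 2)); [lra|].
  have : sqrt 2 * M <= sqrt 2 * Rmax M 0 by apply Rmult_le_compat_l; lra.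
  rewrite -Rmult_assoc Rinv_r; [lra|nz]. }
have := HM _ Hb'.
rewrite P_J sP.
replace (sqrt 2 / (sqrt 2 * sqrt PI) * J (/ sqrt 2 * b) - 1 / 2) with ((J (/ sqrt 2 * b) - sqrt PI / 2) / sqrt PI) by (field; nz).
rewrite Rabs_div; [|nz]. rewrite (Rabs_pos_eq (sqrt PI)); [|lra].
move=> H. apply (Rmult_lt_reg_r (sqrt PI)); [lra|].
rewrite /Rdiv Rmult_assoc Rinv_l; [|nz]. lra.
Qed.

Lemma P_der x : is_derive P x (gauss_density x).
Proof.
apply: is_derive_RInt; [|apply gd_cont].
apply: filter_forall => b; apply: RInt_correct; apply: ex_RInt_continuous => z _; apply gd_cont.
Qed.

Lemma ex_gd a b : ex_RInt gauss_density a b.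
Proof. apply: ex_RInt_continuous => z _; apply gd_cont. Qed.

Lemma isQ x : is_Q x (1/2 - P x).
Proof.
move=> eps e0.
have [M HM] := P_lim eps e0.
exists (Rmax M x) => b Hb pr.
rewrite -RInt_Reals.
have E : RInt gauss_density x b = P b - P x.
{ rewrite /P. have := RInt_Chasles gauss_density 0 x b (ex_gd _ _) (ex_gd _ _).
  rewrite /plus /=. lra. }
rewrite E.
have := HM b ltac:(have := Rmax_l M x; lra).
move=> H. replace (P b - P x - (1/2 - P x)) with (P b - 1/2) by ring. exact H.
Qed.

Lemma mono K k x y : x <= y -> (forall t, x <= t <= y -> derivable_pt_lim K t (k t)) ->
  (forall t, x <= t <= y -> 0 <= k t) -> K x <= K y.
Proof.
move=> [xy|->] Hd Hk; [|lra].
destruct (MVT_cor2 K k x y xy Hd) as [c [Hc Hc2]].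
have := Hk c ltac:(lra). move=> kc.
have : 0 <= k c * (y - x) by apply Rmult_le_pos; lra.
lra.
Qed.

Lemma headcmp G dG x y : x <= y -> (forall t, x <= t <= y -> is_derive G t (dG t)) ->
  (forall t, x <= t <= y -> - dG t <= gauss_density t) -> G x - G y <= P y - P x.
Proof.
move=> xy Hd Hk.
have := mono (fun t => P t + G t) (fun t => gauss_density t + dG t) x y xy.
move=> H. have : P x + G x <= P y + G y; [|lra].
apply H.
- move=> t Ht. apply: derivable_pt_lim_plus; apply/is_derive_Reals; [apply P_der|apply Hd; lra].
- move=> t Ht. have := Hk t Ht. lra.
Qed.

Lemma headcmp' G dG x y : x <= y -> (forall t, x <= t <= y -> is_derive G t (dG t)) ->
  (forall t, x <= t <= y -> gauss_density t <= - dG t) -> P y - P x <= G x - G y.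
Proof.
move=> xy Hd Hk.
have := mono (fun t => - (P t + G t)) (fun t => - (gauss_density t + dG t)) x y xy.
move=> H. have : - (P x + G x) <= - (P y + G y); [|lra].
apply H.
- move=> t Ht. apply: derivable_pt_lim_opp. apply: derivable_pt_lim_plus; apply/is_derive_Reals; [apply P_der|apply Hd; lra].
- move=> t Ht. have := Hk t Ht. lra.
Qed.

Lemma tailcmp G dG x : (forall t, x <= t -> is_derive G t (dG t)) ->
  (forall t, x <= t -> - dG t <= gauss_density t) ->
  (forall eps, 0 < eps -> exists M, forall b, M <= b -> G b < eps) ->
  G x <= 1/2 - P x.
Proof.
move=> Hd Hk Hl.
apply: Rnot_lt_le => H.
set eps := (G x - (1/2 - P x)) / 2.
have e0 : 0 < eps by rewrite /eps; lra.
have [M1 H1] := P_lim eps e0.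
have [M2 H2] := Hl eps e0.
set b := Rmax x (Rmax M1 M2).
have bx : x <= b by apply Rmax_l.
have b1 : M1 <= b by have := Rmax_l M1 M2; have := Rmax_r x (Rmax M1 M2); rewrite -/b; lra.
have b2 : M2 <= b by have := Rmax_r M1 M2; have := Rmax_r x (Rmax M1 M2); rewrite -/b; lra.
have h := headcmp G dG x b bx (fun t Ht => Hd t (proj1 Ht)) (fun t Ht => Hk t (proj1 Ht)).
have := H1 b b1. have := H2 b b2. move=> g1 p1.
have p2 := Rabs_def2 _ _ p1.
rewrite /eps in g1 p2. lra.
Qed.


Lemma PI_gt3 : 3 < PI.
Proof.
destruct (PI_ineq 3) as [H _].
unfold tg_alt, PI_tg in H; simpl in H. lra.
Qed.
Lemma PI_lt4 : PI < 4.
Proof.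
destruct (PI_ineq 1) as [_ H].
unfold tg_alt, PI_tg in H; simpl in H. lra.
Qed.

Definition w y := sqrt (y ^ 2 + 2 * PI).
Definition dd y := (PI - 1) * y + w y.
Definition L y := PI / dd y.
Definition G1 y := gauss_density y * L y.
Definition dG1 y := - y * gauss_density y * L y + gauss_density y * (- PI * ((PI - 1) + y / w y) / (dd y) ^ 2).

Lemma w_pos y : 0 < w y.
Proof. apply sqrt_lt_R0. have := PI_RGT_0. nra. Qed.
Lemma w_sq y : w y * w y = y ^ 2 + 2 * PI.
Proof. apply sqrt_sqrt. have := PI_RGT_0. nra. Qed.
Lemma w_gt y : y < w y.
Proof. have := w_pos y; have := w_sq y; have := PI_RGT_0. nra. Qed.
Lemma dd_pos y : 0 <= y -> 0 < dd y.
Proof. rewrite /dd => y0. have := w_pos y; have := PI_gt3. nra. Qed.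

Lemma gd_pos y : 0 < gauss_density y.
Proof.
rewrite /gauss_density. apply Rdiv_lt_0_compat; [apply exp_pos|].
apply sqrt_lt_R0. have := PI_RGT_0. lra.
Qed.

Lemma G1_der y : 0 <= y -> is_derive G1 y (dG1 y).
Proof.
move=> y0.
have wp := w_pos y. have dp := dd_pos y y0.
rewrite /G1 /dG1 /L /dd /w /gauss_density /w in wp dp *.
have sp : 0 < sqrt (2 * PI) by apply sqrt_lt_R0; have := PI_RGT_0; lra.
auto_derive; replace (y * (y * 1)) with (y ^ 2) by ring.
- repeat split; try nz. have := PI_RGT_0. nra.
- rewrite /Rdiv. field. repeat split; nz.
Qed.

Lemma A_gen y g D W p : 0 < D -> 0 < W ->
  (- (- y * g * (p / D) + g * (- p * (p - 1 + y / W) / D ^ 2)) - g) * ((W + y) * W * D ^ 2)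
  = - g * ((D ^ 2 * W - p * y * D * W - p * (p - 1) * W - p * y) * (W + y)).
Proof. move=> *. field. nz. Qed.

Lemma B_gen y W p : W * W = y ^ 2 + 2 * p ->
  ((((p - 1) * y + W) ^ 2 * W - p * y * ((p - 1) * y + W) * W - p * (p - 1) * W - p * y) * (W + y))
  = p * (W - y) * (y - (p - 3) * W).
Proof.
move=> hw.
transitivity (p * (W - y) * (y - (p - 3) * W) +
   ((W + y) * ((p - 2) * y + W) - (p - 2) * y ^ 2) * (W * W - (y ^ 2 + 2 * p))).
{ ring. }
rewrite hw. ring.
Qed.

Lemma sign_id y : 0 <= y ->
  (- dG1 y - gauss_density y) * ((w y + y) * w y * dd y ^ 2) =
  - gauss_density y * PI * (w y - y) * (y - (PI - 3) * w y).
Proof.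
move=> y0.
have wp := w_pos y. have dp := dd_pos y y0. have hw := w_sq y.
rewrite /dG1 /L A_gen //. rewrite /dd B_gen //. ring.
Qed.

Lemma sgn_le X D Y : 0 < D -> X * D = Y -> Y <= 0 -> X <= 0.
Proof. move=> Dp E Y0. apply: Rnot_lt_le => H. have : 0 < X * D by apply Rmult_lt_0_compat. lra. Qed.
Lemma sgn_ge X D Y : 0 < D -> X * D = Y -> 0 <= Y -> 0 <= X.
Proof. move=> Dp E Y0. apply: Rnot_lt_le => H. have : X * D < 0 by apply Rmult_neg_pos. lra. Qed.

Lemma cond_up y t : 0 <= y <= t -> (PI - 3) * w y <= y -> (PI - 3) * w t <= t.
Proof.
move=> [y0 yt] H.
have a0 := PI_gt3. have a1 := PI_lt4.
have wy := w_pos y. have wt := w_pos t. have hy := w_sq y. have ht := w_sq t.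
have H2 : (PI - 3) ^ 2 * (w y * w y) <= y ^ 2.
{ have : 0 <= (PI - 3) * w y by apply Rmult_le_pos; lra. nra. }
rewrite hy in H2.
have H3 : (PI - 3) ^ 2 * (w t * w t) <= t ^ 2.
{ rewrite ht. have : y ^ 2 <= t ^ 2 by nra. have : 0 < 1 - (PI - 3) ^ 2 by nra. nra. }
apply: Rnot_lt_le => H4.
have : t ^ 2 < (PI - 3) ^ 2 * (w t * w t).
{ have : 0 <= t by lra. nra. }
lra.
Qed.

Lemma cond_down t y : 0 <= t <= y -> y <= (PI - 3) * w y -> t <= (PI - 3) * w t.
Proof.
move=> [t0 ty] H.
apply: Rnot_lt_le => H1.
have := cond_up t y (conj t0 ty) (Rlt_le _ _ H1).
have := PI_gt3. have := w_pos y. have := w_pos t. move=> *.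
have a0 := PI_gt3. have a1 := PI_lt4.
have hy := w_sq y. have ht := w_sq t.
have H2 : t ^ 2 > (PI - 3) ^ 2 * (w t * w t).
{ have : 0 <= (PI - 3) * w t by apply Rmult_le_pos; lra. nra. }
rewrite ht in H2.
have H3 : y ^ 2 <= (PI - 3) ^ 2 * (w y * w y).
{ have : 0 <= y by lra. nra. }
rewrite hy in H3.
have : t ^ 2 <= y ^ 2 by nra.
have : 0 < 1 - (PI - 3) ^ 2 by nra.
nra.
Qed.

Lemma gd_le1 y : gauss_density y <= 1.
Proof.
rewrite /gauss_density.
have s1 : 1 <= sqrt (2 * PI).
{ rewrite -sqrt_1. apply sqrt_le_1_alt. have := PI_gt3. lra. }
have e1 : exp (- y ^ 2 / 2) <= 1.
{ rewrite -exp_0. apply exp_mono. have : 0 <= y ^ 2 by apply pow2_ge_0. lra. }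
have ep := exp_pos (- y ^ 2 / 2).
apply (Rmult_le_reg_r (sqrt (2 * PI))); [lra|].
rewrite /Rdiv Rmult_assoc Rinv_l; [|nz]. lra.
Qed.

Lemma G1_lim eps : 0 < eps -> exists M, forall b, M <= b -> G1 b < eps.
Proof.
move=> e0. exists (2 * PI / eps + 1) => b Hb.
have p0 := PI_gt3.
have q : 0 < 2 * PI / eps by apply Rdiv_lt_0_compat; lra.
have b0 : 0 < b by lra.
have db : b <= dd b by rewrite /dd; have := w_pos b; nra.
rewrite /G1 /L.
have g1 := gd_le1 b. have g0 := gd_pos b.
have L1 : PI / dd b <= PI / b.
{ apply Rmult_le_compat_l; [lra|]. apply Rinv_le_contravar; lra. }
have L0 : 0 < PI / dd b by apply Rdiv_lt_0_compat; [lra|apply dd_pos; lra].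
have : PI / b < eps.
{ apply (Rmult_lt_reg_r b); [lra|]. rewrite /Rdiv Rmult_assoc Rinv_l; [|nz].
  have : 2 * PI / eps * eps = 2 * PI by field; nz.
  nra. }
nra.
Qed.

Lemma G1_0 : G1 0 = 1 / 2.
Proof.
rewrite /G1 /L /dd /w /gauss_density.
have sp : 0 < sqrt (2 * PI) by apply sqrt_lt_R0; have := PI_gt3; lra.
have ss : sqrt (2 * PI) * sqrt (2 * PI) = 2 * PI by apply sqrt_sqrt; have := PI_gt3; lra.
replace (- 0 ^ 2 / 2) with 0 by field. rewrite exp_0.
replace (0 ^ 2 + 2 * PI) with (2 * PI) by ring.
replace ((PI - 1) * 0 + sqrt (2 * PI)) with (sqrt (2 * PI)) by ring.
transitivity (PI / (sqrt (2 * PI) * sqrt (2 * PI))). { field. nz. }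
rewrite ss. field. have h3 := PI_gt3. nz.
Qed.

Lemma P0 : P 0 = 0.
Proof. rewrite /P RInt_point. reflexivity. Qed.

Lemma boyd y : 0 <= y -> G1 y <= 1 / 2 - P y.
Proof.
move=> y0.
destruct (Rle_lt_dec ((PI - 3) * w y) y) as [HA|HB].
- apply: (tailcmp G1 dG1 y).
  + move=> t Ht. apply G1_der. lra.
  + move=> t Ht.
    have t0 : 0 <= t by lra.
    have c := cond_up y t (conj y0 Ht) HA.
    have : - dG1 t - gauss_density t <= 0; [|lra].
    apply: (sgn_le _ ((w t + t) * w t * dd t ^ 2) _ _ (sign_id t t0)).
    * have := w_pos t. have := dd_pos t t0. move=> *. apply Rmult_lt_0_compat; [nra|]. apply pow_lt. lra.
    * have := gd_pos t. have := w_gt t. have := PI_gt3. move=> *.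
      have : 0 <= gauss_density t * PI * (w t - t) * (t - (PI - 3) * w t).
      { apply Rmult_le_pos; [|lra]. apply Rmult_le_pos; [|lra]. apply Rmult_le_pos; lra. }
      lra.
  + exact G1_lim.
- have h := headcmp' G1 dG1 0 y y0.
  have : P y - P 0 <= G1 0 - G1 y; [|rewrite P0 G1_0; lra].
  apply h.
  + move=> t Ht. apply G1_der. lra.
  + move=> t Ht.
    have t0 : 0 <= t by lra.
    have c := cond_down t y Ht (Rlt_le _ _ HB).
    have : 0 <= - dG1 t - gauss_density t; [|lra].
    apply: (sgn_ge _ ((w t + t) * w t * dd t ^ 2) _ _ (sign_id t t0)).
    * have := w_pos t. have := dd_pos t t0. move=> *. apply Rmult_lt_0_compat; [nra|]. apply pow_lt. lra.
    * have := gd_pos t. have := w_gt t. have := PI_gt3. move=> *.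
      have : 0 <= gauss_density t * PI * (w t - t) * ((PI - 3) * w t - t).
      { apply Rmult_le_pos; [|lra]. apply Rmult_le_pos; [|lra]. apply Rmult_le_pos; lra. }
      lra.
Qed.


Definition hh s t := t * exp (- (s * t ^ 2) / 2).

Lemma U1 s a b : 0 < s -> 0 < a <= b -> s * b ^ 2 <= 1 -> hh s a <= hh s b.
Proof.
move=> s0 [a0 ab] sb.
set z := s * (b ^ 2 - a ^ 2).
have z0 : 0 <= z by rewrite /z; apply Rmult_le_pos; nra.
set q := exp (- z / 2).
have q0 : 0 < q by apply exp_pos.
have qq : q * q = exp (- z) by rewrite /q -exp_plus; f_equal; field.
have ez : 1 - z <= exp (- z) by have := exp_ineq1_le (- z); lra.
have Eb : exp (- (s * b ^ 2) / 2) = exp (- (s * a ^ 2) / 2) * q.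
{ rewrite /q -exp_plus; f_equal; rewrite /z; field. }
rewrite /hh Eb.
have ea := exp_pos (- (s * a ^ 2) / 2).
have : a <= b * q.
{ have h1 : a ^ 2 <= b ^ 2 * (1 - z).
  { rewrite /z. have : 0 <= (b ^ 2 - a ^ 2) * (1 - s * b ^ 2) by apply Rmult_le_pos; nra. nra. }
  have h2 : a ^ 2 <= (b * q) ^ 2 by nra.
  have : 0 <= b * q by nra.
  nra. }
nra.
Qed.

Lemma U2 s a b : 0 < s -> 0 < a <= b -> 1 <= s * a ^ 2 -> hh s b <= hh s a.
Proof.
move=> s0 [a0 ab] sa.
set z := s * (b ^ 2 - a ^ 2).
have z0 : 0 <= z by rewrite /z; apply Rmult_le_pos; nra.
set q := exp (- z / 2).
have q0 : 0 < q by apply exp_pos.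
have qq : q * q = exp (- z) by rewrite /q -exp_plus; f_equal; field.
have ez : (1 + z) * exp (- z) <= 1.
{ have := exp_ineq1_le z. have := exp_pos (- z). move=> *.
  have : exp z * exp (- z) = 1 by rewrite -exp_plus Rplus_opp_r exp_0.
  nra. }
have Eb : exp (- (s * b ^ 2) / 2) = exp (- (s * a ^ 2) / 2) * q.
{ rewrite /q -exp_plus; f_equal; rewrite /z; field. }
rewrite /hh Eb.
have ea := exp_pos (- (s * a ^ 2) / 2).
have : b * q <= a.
{ have h1 : b ^ 2 <= a ^ 2 * (1 + z).
  { rewrite /z. have : 0 <= (b ^ 2 - a ^ 2) * (s * a ^ 2 - 1) by apply Rmult_le_pos; nra. nra. }
  have h2 : (b * q) ^ 2 <= a ^ 2.
  { have H1 : b ^ 2 * (q * q) <= a ^ 2 * (1 + z) * (q * q) by apply Rmult_le_compat_r; nra.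
    rewrite qq in H1. have H2 : a ^ 2 * ((1 + z) * exp (- z)) <= a ^ 2 * 1 by apply Rmult_le_compat_l; nra.
    have : (b * q) ^ 2 = b ^ 2 * exp (- z) by rewrite -qq; ring.
    nra. }
  have : 0 <= b * q by nra.
  nra. }
nra.
Qed.

Definition cc k := exp (/ (PI * (k - 1) + 2)) / (2 * k) * sqrt (/ PI * (k - 1) * (PI * (k - 1) + 2)).
Definition FF k x := cc k * exp (- (k * x ^ 2) / 2).
Definition dFF k x := - (cc k * k * x * exp (- (k * x ^ 2) / 2)).
Definition x0 k := sqrt (2 / ((k - 1) * (PI * (k - 1) + 2))).

Lemma FF_der k x : is_derive (FF k) x (dFF k x).
Proof. rewrite /FF /dFF. auto_derive; auto. replace (x * (x * 1)) with (x ^ 2) by ring. rewrite /Rdiv. field. Qed.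


Lemma main_facts k : 1 < k ->
  let s := k - 1 in let A := PI * s + 2 in
  0 < x0 k /\ x0 k * x0 k = 2 / (s * A) /\ s * x0 k ^ 2 <= 1 /\ 0 < cc k /\
  cc k * k * hh s (x0 k) = / sqrt (2 * PI) /\ w (x0 k) = (PI * s + 1) * x0 k.
Proof.
move=> k1 s A.
have p3 := PI_gt3.
have s0 : 0 < s by rewrite /s; lra.
have A0 : 2 <= A by rewrite /A; nra.
have sA : 0 < s * A by nra.
have xp : 0 < x0 k by apply sqrt_lt_R0; apply Rdiv_lt_0_compat; [lra|rewrite /s /A in sA; exact sA].
have xx : x0 k * x0 k = 2 / (s * A) by apply sqrt_sqrt; left; apply Rdiv_lt_0_compat; lra.
have r0 : 0 < / PI * s * A by apply Rmult_lt_0_compat; [apply Rmult_lt_0_compat; [apply Rinv_0_lt_compat|]|]; lra.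
set r := sqrt (/ PI * s * A).
have rp : 0 < r by apply sqrt_lt_R0.
have rr : r * r = / PI * s * A by apply sqrt_sqrt; lra.
set q := sqrt (2 * PI).
have qp : 0 < q by apply sqrt_lt_R0; lra.
have qq : q * q = 2 * PI by apply sqrt_sqrt; lra.
have ccE : cc k = exp (/ A) / (2 * k) * r by [].
split; [exact xp|]. split; [exact xx|]. split.
{ have : s * (x0 k * x0 k) = 2 / A by rewrite xx; field; nz.
  have : 2 / A <= 1 by apply (Rmult_le_reg_r A); [lra|]; rewrite /Rdiv Rmult_assoc Rinv_l; [lra|nz].
  move=> *. rewrite /= Rmult_1_r. lra. }
split.
{ rewrite ccE. apply Rmult_lt_0_compat; [|lra]. apply Rdiv_lt_0_compat; [apply exp_pos|lra]. }
split.
{ rewrite ccE /hh.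
  have e1 : exp (/ A) * exp (- (s * x0 k ^ 2) / 2) = 1.
  { rewrite -exp_plus -exp_0. f_equal. rewrite /= Rmult_1_r xx. field. nz. }
  have z : r * x0 k * q = 2.
  { have : (r * x0 k * q) ^ 2 = 4.
    { transitivity ((r * r) * (x0 k * x0 k) * (q * q)). { ring. }
      rewrite rr xx qq. field. nz. }
    have : 0 < r * x0 k * q by apply Rmult_lt_0_compat; [apply Rmult_lt_0_compat|]; lra.
    nra. }
  transitivity ((exp (/ A) * exp (- (s * x0 k ^ 2) / 2)) * (r * x0 k * q) / (2 * q)).
  { field. nz. }
  rewrite e1 z. field. nz. }
{ rewrite /w. apply sqrt_lem_1.
  - have := pow2_ge_0 (x0 k). lra.
  - apply Rmult_le_pos; [nra|lra].
  - transitivity ((PI * s) * (PI * s + 2) * (x0 k * x0 k) + x0 k ^ 2). { ring. }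
    rewrite xx. rewrite -/A. field. nz. }
Qed.

Lemma expk k t : exp (- (k * t ^ 2) / 2) = exp (- ((k - 1) * t ^ 2) / 2) * exp (- t ^ 2 / 2).
Proof. rewrite -exp_plus. f_equal. field. Qed.

Lemma main_ineq k x : 1 < k -> FF k x <= 1 / 2 - P x.
Proof.
move=> k1.
have [xp [xx [sx [c0 [I3 wx]]]]] := main_facts k k1.
set s := k - 1 in xx sx I3 wx.
set a := x0 k in xp xx sx I3 wx.
have s0 : 0 < s by rewrite /s; lra.
have ks : k = s + 1 by rewrite /s; ring.
clearbody s a.
have p3 := PI_gt3.
have qp : 0 < sqrt (2 * PI) by apply sqrt_lt_R0; lra.
have ckp : 0 < cc k * k by apply Rmult_lt_0_compat; lra.
have dFe : forall t, - dFF k t = cc k * k * hh s t * exp (- t ^ 2 / 2).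
{ move=> t. rewrite /dFF /hh expk ks. replace (s + 1 - 1) with s by ring. ring. }
have gde : forall t, gauss_density t = cc k * k * hh s a * exp (- t ^ 2 / 2).
{ move=> t. rewrite I3 /gauss_density /Rdiv. ring. }
have crit1 : forall t, hh s t <= hh s a -> - dFF k t <= gauss_density t.
{ move=> t H. rewrite dFe gde. apply Rmult_le_compat_r; [left; apply exp_pos|].
  apply Rmult_le_compat_l; lra. }
have crit2 : forall t, hh s a <= hh s t -> gauss_density t <= - dFF k t.
{ move=> t H. rewrite dFe gde. apply Rmult_le_compat_r; [left; apply exp_pos|].
  apply Rmult_le_compat_l; lra. }
have Fa : FF k a <= 1 / 2 - P a.
{ have := boyd a (Rlt_le _ _ xp).
  have -> : G1 a = FF k a; [|lra].
  rewrite /G1 /L /dd wx gde /FF expk. replace (k - 1) with s by (rewrite ks; ring).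
  have : hh s a = a * exp (- (s * a ^ 2) / 2) by [].
  move=> ->. set C := cc k. clearbody C. rewrite ks. field.
  have h1 : 0 < PI * s * a by apply Rmult_lt_0_compat; [apply Rmult_lt_0_compat|]; lra.
  have h2 : 0 < PI * a by apply Rmult_lt_0_compat; lra.
  have : 0 < (PI - 1) * a + (PI * s + 1) * a by nra.
  move=> *. repeat split; nz. }
have hpos : 0 < hh s a by apply Rmult_lt_0_compat; [lra|apply exp_pos].
have Fd := fun t (_ : True) => FF_der k t.
destruct (Rle_lt_dec x a) as [xa|ax].
-
  have := headcmp (FF k) (dFF k) x a xa (fun t _ => FF_der k t).
  move=> H. have : FF k x - FF k a <= P a - P x; [|lra].
  apply H => t [xt ta]. apply crit1.
  destruct (Rle_lt_dec t 0) as [t0|t0].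
  + have : hh s t <= 0 by rewrite /hh; have := exp_pos (- (s * t ^ 2) / 2); nra.
    lra.
  + apply U1; [lra|lra|]. have : a ^ 2 = a * a by ring. lra.
- destruct (Rle_lt_dec (hh s a) (hh s x)) as [hx|hx].
  +
    have := headcmp' (FF k) (dFF k) a x (Rlt_le _ _ ax) (fun t _ => FF_der k t).
    move=> H. have : P x - P a <= FF k a - FF k x; [|lra].
    apply H => t [ha tx]. apply crit2.
    destruct (Rle_lt_dec (s * t ^ 2) 1) as [st|st].
    * apply U1; lra.
    * have := U2 s t x s0 (conj (ltac:(lra) : 0 < t) tx) (Rlt_le _ _ st). lra.
  +
    have sxx : 1 < s * x ^ 2.
    { apply: Rnot_le_lt => H. have := U1 s a x s0 (conj xp (Rlt_le _ _ ax)) H. lra. }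
    apply: (tailcmp (FF k) (dFF k) x).
    * move=> t _. apply FF_der.
    * move=> t Ht. apply crit1.
      have := U2 s x t s0 (conj (ltac:(lra) : 0 < x) Ht) (Rlt_le _ _ sxx). lra.
    * move=> eps e0. exists (2 * cc k / eps + 1) => b Hb.
      have q : 0 < 2 * cc k / eps by apply Rdiv_lt_0_compat; lra.
      have b1 : 1 <= b by lra.
      have E1 : FF k b * exp (k * b ^ 2 / 2) = cc k.
      { rewrite /FF Rmult_assoc -exp_plus. replace (- (k * b ^ 2) / 2 + k * b ^ 2 / 2) with 0 by field.
        rewrite exp_0. ring. }
      have E2 : 1 + k * b ^ 2 / 2 <= exp (k * b ^ 2 / 2) by apply exp_ineq1_le.
      have E3 : b <= k * b ^ 2 by nra.
      have Fp : 0 < FF k b by rewrite /FF; apply Rmult_lt_0_compat; [lra|apply exp_pos].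
      have E4 : 2 * cc k / eps * eps = 2 * cc k by field; nz.
      nra.
Qed.

Theorem theorem1 (x kappa : R) (hk : 1 <= kappa) :
  exists q : R, is_Q x q /\
    q >= (exp (/ (PI * (kappa - 1) + 2)) / (2 * kappa)
          * sqrt (/ PI * (kappa - 1) * (PI * (kappa - 1) + 2)))
         * exp (- (kappa * x ^ 2) / 2).
Proof.
exists (1 / 2 - P x). split; [apply isQ|].
destruct hk as [k1|k1].
- have := main_ineq kappa x k1. rewrite /FF /cc. lra.
- rewrite -k1.
  replace (/ PI * (1 - 1) * (PI * (1 - 1) + 2)) with 0 by ring.
  rewrite sqrt_0 Rmult_0_r Rmult_0_l.
  have := tailcmp (fun _ => 0) (fun _ => 0) x.
  move=> H. apply Rle_ge. apply H.
  + move=> t _. apply: is_derive_const.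
  + move=> t _. have := gd_pos t. lra.
  + move=> eps e0. exists 0 => b _. exact e0.
Qed.
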